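(* Let $C>0$ and for each $A>1$ let $\mathcal{E}_A=\{(X,M): X=(\mathbf f,\mathbf g,\mathbf F,\mathbf G,\mathbf u,\mathbf v)\in\mathbb{R}^6,\ \mathbf u,\mathbf v>0,\ 1\le\mathbf u\mathbf v\le A,\ \mathbf f^2\le\mathbf F\mathbf v,\ \mathbf g^2\le\mathbf G\mathbf u,\ 0\le M\le1\}$ and let $\mathcal{B}_A:\mathcal{E}_A\to\mathbb{R}$ be functions such that (i) $0\le\mathcal{B}_A(X,M)\le CA\mathbf F^{1/2}\mathbf G^{1/2}$ on $\mathcal{E}_A$, and (ii) for all $(X,M),(X_1,M_1),(X_2,M_2)\in\mathcal{E}_A$ with $X=(X_1+X_2)/2$ and $\mathbf d:=M-(M_1+M_2)/2\ge0$, \[ \mathcal{B}_A(X,M)-\tfrac12\left(\mathcal{B}_A(X_1,M_1)+\mathcal{B}_A(X_2,M_2)\right)\ge\mathbf d\,|\mathbf f|\,|\mathbf g_1-\mathbf g_2|, \] where $\mathbf f$ is the first coordinate of $X$ and $\mathbf g_i$ the second coordinate of $X_i$. Fix $A>1$, $n\ge1$ and a dyadic interval $I_0\subset\mathbb{R}$, and suppose that for every $I\in\operatorname{chld}_k(I_0)$, $0\le k\le n$, points $(X_I,M_I)\in\mathcal{E}_A$, $X_I=(\mathbf f_I,\mathbf g_I,\mathbf F_I,\mathbf G_I,\mathbf u_I,\mathbf v_I)$, are given such that $X_I=(X_{I_1}+X_{I_2})/2$ for every $I\in\operatorname{chld}_k(I_0)$, $0\le k<n$, with children $I_1,I_2$;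 $M_I=(M_{I_1}+M_{I_2})/2$ for every such $I\neq I_0$; and $\mathbf d_{I_0}:=M_{I_0}-2^{-n}\sum_{I\in\operatorname{chld}_n(I_0)}M_I\ge0$. Then, with $A'=4.5A$, \[ \mathbf d_{I_0}\,|\mathbf f_{I_0}|\Bigl(2^{-n}\!\!\sum_{I\in\operatorname{chld}_n(I_0)}|\mathbf g_I-\mathbf g_{I_0}|\Bigr)\le 36\Bigl(\mathcal{B}_{A'}(X_{I_0},M_{I_0})-2^{-n}\!\!\sum_{I\in\operatorname{chld}_n(I_0)}\mathcal{B}_{A'}(X_I,M_I)\Bigr). \]
   Context: For a dyadic interval $I$, $\operatorname{chld}_0(I)=\{I\}$ and $\operatorname{chld}_k(I)$ is the set of the $2^k$ dyadic subintervals of $I$ of length $2^{-k}|I|$. Note $\mathcal{E}_A\subset\mathcal{E}_{A'}$ for $A\le A'$. *)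

(* Defs.v *)
From Stdlib Require Import Reals.
Open Scope R_scope.

Record pt := mkpt { pf : R; pg : R; pF : R; pG : R; pu : R; pv : R }.

Definition ptavg (X1 X2 : pt) : pt :=
  mkpt ((pf X1 + pf X2) / 2) ((pg X1 + pg X2) / 2) ((pF X1 + pF X2) / 2)
       ((pG X1 + pG X2) / 2) ((pu X1 + pu X2) / 2) ((pv X1 + pv X2) / 2).

Definition inE (A : R) (X : pt) (M : R) : Prop :=
  0 < pu X /\ 0 < pv X /\ 1 <= pu X * pv X /\ pu X * pv X <= A /\
  pf X ^ 2 <= pF X * pv X /\ pg X ^ 2 <= pG X * pu X /\ 0 <= M /\ M <= 1.

Fixpoint sumR (m : nat) (f : nat -> R) : R :=
  match m with O => 0 | S m' => sumR m' f + f m' end.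

(* Main.v *)
Require Import Defs.
From Stdlib Require Import Reals Lra Lia Psatz.
Open Scope R_scope.

Lemma pow2_pos m : 0 < 2 ^ m.
Proof. apply pow_lt; lra. Qed.

Lemma dy01 m k : (k <= 2 ^ m)%nat -> 0 <= INR k / 2 ^ m <= 1.
Proof.
  intros H. pose proof (pow2_pos m). apply le_INR in H.
  rewrite pow_INR in H. simpl in H. replace (1+1) with 2 in H by ring.
  split. unfold Rdiv; apply Rmult_le_pos; [apply pos_INR | left; apply Rinv_0_lt_compat; lra].
  apply (Rmult_le_reg_r (2^m)); auto. unfold Rdiv. rewrite Rmult_assoc, Rinv_l; lra.
Qed.

Lemma conv01 x y r : 0<=x<=1 -> 0<=y<=1 -> 0<=r<=1 -> 0 <= x + r*(y-x) <= 1.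
Proof. intros; nra. Qed.

Lemma D1 (phi : R -> R)
  (mid : forall x y, 0<=x<=1 -> 0<=y<=1 -> phi ((x+y)/2) >= (phi x + phi y)/2) :
  forall m k, (k <= 2^m)%nat -> forall x y, 0<=x<=1 -> 0<=y<=1 ->
  phi (x + INR k / 2^m * (y - x)) >= phi x + INR k / 2^m * (phi y - phi x).
Proof.
  induction m as [|m IH]; intros k Hk x y Hx Hy.
  - simpl in Hk. destruct k as [|[|k]]; try lia.
    + simpl. replace (x + 0/1*(y-x)) with x by field. lra.
    + simpl. replace (x + 1/1*(y-x)) with y by field. lra.
  - assert (E: (2^S m = 2 * 2^m)%nat) by (simpl; lia).
    pose proof (pow2_pos m).
    destruct (Nat.Even_or_Odd k) as [[k' ->]|[k' ->]].
    + assert (k' <= 2^m)%nat by lia.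
      replace (INR (2*k') / 2 ^ S m) with (INR k' / 2^m).
      2:{ rewrite mult_INR. simpl. field. lra. }
      apply IH; auto.
    + assert (k' + 1 <= 2^m)%nat by lia.
      assert (k' <= 2^m)%nat by lia.
      pose proof (dy01 m k' ltac:(lia)). pose proof (dy01 m (k'+1) ltac:(lia)).
      set (a := x + INR k' / 2^m * (y-x)).
      set (b := x + INR (k'+1) / 2^m * (y-x)).
      assert (Ha: 0<=a<=1) by (apply conv01; auto).
      assert (Hb: 0<=b<=1) by (apply conv01; auto).
      replace (x + INR (2*k'+1) / 2^S m * (y-x)) with ((a+b)/2).
      2:{ unfold a, b. rewrite plus_INR, plus_INR, mult_INR. simpl. field. lra. }
      replace (INR (2*k'+1) / 2^S m) with ((INR k' / 2^m + INR (k'+1)/2^m)/2).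
      2:{ rewrite plus_INR, plus_INR, mult_INR. simpl. field. lra. }
      specialize (mid a b Ha Hb). pose proof (IH k' ltac:(lia) x y Hx Hy).
      pose proof (IH (k'+1)%nat ltac:(lia) x y Hx Hy). fold a in H4. fold b in H5. lra.
Qed.

Lemma D2 m mu : 0 <= mu <= 1 -> exists k, (k <= 2^m)%nat /\ INR k / 2^m <= mu <= (INR k + 1)/2^m.
Proof.
  intros Hmu. induction m as [|m IH].
  - exists 0%nat. simpl. split. lia. split; lra.
  - destruct IH as [k [Hk [H1 H2]]]. pose proof (pow2_pos m).
    destruct (Rle_dec mu ((2 * INR k + 1) / 2^(S m))) as [Hc|Hc].
    + exists (2*k)%nat. split. simpl; lia. rewrite mult_INR.
      replace (INR 2) with 2 by (simpl; ring).
      replace (2 * INR k / 2^S m) with (INR k / 2^m) by (simpl; field; lra).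
      split. lra. simpl in Hc |- *. 
      replace ((2*INR k + 1)/(2*2^m)) with ((2*INR k + 1)/(2*2^m)) in Hc by ring. lra.
    + exists (2*k+1)%nat. assert (Hlt: (2*k+1 < 2^S m)%nat).
      { apply INR_lt. rewrite pow_INR. rewrite plus_INR, mult_INR. simpl INR.
        replace (1+1) with 2 by ring.
        assert (1 < (2*INR k + 1)/2^S m -> False) by lra.
        apply Rnot_le_lt. intro HH. apply H0.
        apply (Rmult_lt_reg_r (2^S m)). apply pow2_pos. unfold Rdiv. rewrite Rmult_assoc, Rinv_l.
        2:{ apply pow_nonzero; lra. } 
        assert (2 * INR k + 1 <> 2 ^ S m). 
        { intro E. apply Hc. rewrite E. unfold Rdiv. rewrite Rinv_r. lra. apply pow_nonzero; lra. }
        lra. }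
      split. lia. rewrite plus_INR, mult_INR. simpl INR. simpl in Hc |- *.
      split.
      * replace ((1+1) * INR k + 1) with (2 * INR k + 1) by ring. lra.
      * replace (((1+1) * INR k + 1 + 1) / (2 * 2^m)) with ((INR k + 1)/2^m) by (field; lra). lra.
Qed.

Lemma small_pow r : 0 < r -> exists m, 0 < / 2^m < r.
Proof.
  intros Hr. destruct (pow_lt_1_zero (/2) ltac:(rewrite Rabs_pos_eq; lra) r Hr) as [N HN].
  exists N. specialize (HN N (le_n _)). rewrite Rabs_pos_eq in HN.
  2:{ apply pow_le; lra. }
  rewrite pow_inv in HN. split; auto. apply Rinv_0_lt_compat, pow2_pos.
Qed.

Lemma conc1 (phi : R -> R)
  (mid : forall x y, 0<=x<=1 -> 0<=y<=1 -> phi ((x+y)/2) >= (phi x + phi y)/2)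
  (nn : forall x, 0<=x<=1 -> 0 <= phi x) :
  forall mu, 0 <= mu <= 1 -> phi mu >= mu * phi 1 + (1-mu) * phi 0.
Proof.
  intros mu Hmu.
  destruct (Req_dec mu 0) as [->|H0]. { lra. }
  destruct (Req_dec mu 1) as [->|H1]. { lra. }
  set (L := mu * phi 1 + (1-mu) * phi 0).
  apply Rnot_lt_ge. intro Hlt.
  set (delta := L - phi mu).
  set (K := Rabs (phi 1 - phi 0)).
  assert (HK: 0 <= K) by apply Rabs_pos.
  assert (HL: 0 <= Rabs L) by apply Rabs_pos.
  set (r := Rmin (Rmin mu (1-mu)) (delta / (Rabs L + K + 1))).
  assert (Hr: 0 < r).
  { unfold r. apply Rmin_glb_lt. apply Rmin_glb_lt; lra.
    unfold delta. apply Rdiv_lt_0_compat; lra. }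
  destruct (small_pow r Hr) as [m [He0 Her]].
  set (e := / 2^m) in *.
  assert (Hr1: r <= mu) by (unfold r; eapply Rle_trans; [apply Rmin_l| apply Rmin_l]).
  assert (Hr2: r <= 1 - mu) by (unfold r; eapply Rle_trans; [apply Rmin_l| apply Rmin_r]).
  assert (Hr3: r <= delta / (Rabs L + K + 1)) by (unfold r; apply Rmin_r).
  assert (Hd: e * (Rabs L + K + 1) < delta).
  { apply (Rlt_le_trans _ (delta / (Rabs L + K + 1) * (Rabs L + K + 1))).
    apply Rmult_lt_compat_r; lra. right; field; lra. }
  destruct (D2 (m+m) mu Hmu) as [k [Hk [Hp1 Hp2]]].
  assert (Hee: / 2^(m+m) = e * e) by (unfold e; rewrite pow_add, Rinv_mult; auto).
  set (p := INR k / 2^(m+m)) in *.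
  assert (Hp3: mu - p <= e * e).
  { rewrite <- Hee. unfold p. replace ((INR k + 1)/2^(m+m)) with (INR k / 2^(m+m) + /2^(m+m)) in Hp2.
    lra. field. apply pow_nonzero; lra. }
  assert (He1: e < 1) by lra.
  set (q := mu + (1-e) * (mu - p) / e).
  assert (Hq: 0 <= q <= 1).
  { unfold q. split.
    - apply Rplus_le_le_0_compat. lra. unfold Rdiv. apply Rmult_le_pos. nra. left; apply Rinv_0_lt_compat; lra.
    - assert ((1-e) * (mu - p)/e <= e).
      { apply (Rmult_le_reg_r e). lra. unfold Rdiv. rewrite Rmult_assoc, Rinv_l by lra. nra. }
      lra. }
  pose proof (dy01 _ _ Hk) as Hp01. fold p in Hp01.
  pose proof (D1 phi mid m 1 ltac:(pose proof (Nat.pow_nonzero 2 m ltac:(lia)); lia) p q Hp01 Hq) as HA.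
  replace (INR 1 / 2^m) with e in HA by (unfold e; simpl; field; apply pow_nonzero; lra).
  replace (p + e * (q - p)) with mu in HA by (unfold q; field; lra).
  pose proof (D1 phi mid (m+m) k Hk 0 1 ltac:(lra) ltac:(lra)) as HB. fold p in HB.
  replace (0 + p * (1 - 0)) with p in HB by ring.
  pose proof (nn q Hq).
  assert (Habs: Rabs ((mu - p) * (phi 1 - phi 0)) <= e * K).
  { rewrite Rabs_mult. unfold K. apply Rmult_le_compat_r. apply Rabs_pos.
    rewrite Rabs_pos_eq by lra. nra. }
  pose proof (Rle_abs ((mu - p) * (phi 1 - phi 0))).
  assert (phi p >= L - e * K) by (unfold L; nra).
  assert (phi mu >= (1-e) * (L - e*K)) by nra.
  assert ((1-e)*(L - e*K) >= L - e * (Rabs L + K)).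
  { pose proof (Rle_abs L). pose proof (Rle_abs (-L)). rewrite Rabs_Ropp in H6. nra. }
  unfold delta in Hd. nra.
Qed.

Fixpoint Ts (h : nat -> R) (r j : nat) : R :=
  match r with O => h j | S r' => Ts h r' (2*j)%nat + Ts h r' (2*j+1)%nat end.

Definition lam (w : nat -> R) (r j : nat) : R :=
  Ts w r (2*j)%nat / (Ts w r (2*j)%nat + Ts w r (2*j+1)%nat).

Fixpoint Qh (w h : nat -> R) (r j : nat) : R :=
  match r with O => h j
  | S r' => lam w r' j * Qh w h r' (2*j)%nat + (1 - lam w r' j) * Qh w h r' (2*j+1)%nat end.

Definition comb (l : R) (P Q : pt) : pt :=
  mkpt (l * pf P + (1-l) * pf Q) (l * pg P + (1-l) * pg Q) (l * pF P + (1-l) * pF Q)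
       (l * pG P + (1-l) * pG Q) (l * pu P + (1-l) * pu Q) (l * pv P + (1-l) * pv Q).

Definition QP (w : nat -> R) (L : nat -> pt) (r j : nat) : pt :=
  mkpt (Qh w (fun i => pf (L i)) r j) (Qh w (fun i => pg (L i)) r j)
       (Qh w (fun i => pF (L i)) r j) (Qh w (fun i => pG (L i)) r j)
       (Qh w (fun i => pu (L i)) r j) (Qh w (fun i => pv (L i)) r j).

Lemma QP_S w L r j : QP w L (S r) j = comb (lam w r j) (QP w L r (2*j)%nat) (QP w L r (2*j+1)%nat).
Proof. reflexivity. Qed.

Lemma QP_0 w L j : QP w L 0 j = L j.
Proof. unfold QP. simpl. destruct (L j); reflexivity. Qed.

Lemma pt_ext P Q : pf P = pf Q -> pg P = pg Q -> pF P = pF Q -> pG P = pG Q ->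
  pu P = pu Q -> pv P = pv Q -> P = Q.
Proof. destruct P, Q; simpl; intros; subst; reflexivity. Qed.

Lemma Ts_ext h1 h2 r j : (forall i, h1 i = h2 i) -> Ts h1 r j = Ts h2 r j.
Proof. intros H. revert j; induction r; intros j; simpl; auto. rewrite !IHr; auto. Qed.

Lemma Ts_le h1 h2 r j : (forall i, h1 i <= h2 i) -> Ts h1 r j <= Ts h2 r j.
Proof. intros H. revert j; induction r; intros j; simpl; auto.
  apply Rplus_le_compat; auto. Qed.

Lemma Ts_lin a b h1 h2 r j : Ts (fun i => a * h1 i + b * h2 i) r j = a * Ts h1 r j + b * Ts h2 r j.
Proof. revert j; induction r; intros j; simpl; auto. rewrite !IHr; ring. Qed.

Lemma Ts_scal a h r j : Ts (fun i => a * h i) r j = a * Ts h r j.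
Proof. revert j; induction r; intros j; simpl; auto. rewrite !IHr; ring. Qed.

Lemma Ts_const c r j : Ts (fun _ => c) r j = 2^r * c.
Proof. revert j; induction r; intros j; simpl; auto. ring. rewrite !IHr; ring. Qed.

Lemma Ts_pos h r j : (forall i, 0 < h i) -> 0 < Ts h r j.
Proof. intros H. revert j; induction r; intros j; simpl; auto.
  apply Rplus_lt_0_compat; auto. Qed.

Lemma Ts_nonneg h r j : (forall i, 0 <= h i) -> 0 <= Ts h r j.
Proof. intros H. revert j; induction r; intros j; simpl; auto.
  apply Rplus_le_le_0_compat; auto. Qed.

Lemma lam01 w r j : (forall i, 0 < w i) -> 0 <= lam w r j <= 1.
Proof. intros H. unfold lam. pose proof (Ts_pos w r (2*j) H). pose proof (Ts_pos w r (2*j+1) H).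
  split. unfold Rdiv; apply Rmult_le_pos; [lra| left; apply Rinv_0_lt_compat; lra].
  apply (Rmult_le_reg_r (Ts w r (2 * j) + Ts w r (2 * j + 1))). lra.
  unfold Rdiv. rewrite Rmult_assoc, Rinv_l; lra. Qed.

Lemma Ts_Qh w h r j : (forall i, 0 < w i) -> Ts w r j * Qh w h r j = Ts (fun i => w i * h i) r j.
Proof. intros H. revert j; induction r; intros j; cbn [Ts Qh]; auto.
  rewrite <- !IHr. unfold lam. pose proof (Ts_pos w r (2*j) H). pose proof (Ts_pos w r (2*j+1) H).
  field. lra. Qed.


Lemma sumR_ext m f g : (forall i, (i < m)%nat -> f i = g i) -> sumR m f = sumR m g.
Proof. induction m; simpl; intros H; auto. rewrite IHm by (intros; apply H; lia). rewrite H by lia. auto. Qed.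

Lemma sumR_add a b f : sumR (a + b) f = sumR a f + sumR b (fun i => f (a + i)%nat).
Proof. induction b; simpl. rewrite Nat.add_0_r; ring. rewrite Nat.add_succ_r. simpl. rewrite IHb. ring. Qed.

Lemma Ts_sumR h r j : Ts h r j = sumR (2^r) (fun i => h (j * 2^r + i)%nat).
Proof. revert j; induction r; intros j; cbn [Ts].
  - simpl. rewrite Nat.mul_1_r, Nat.add_0_r. ring.
  - replace (2^S r)%nat with (2^r + 2^r)%nat by (simpl; lia).
    rewrite sumR_add, !IHr. f_equal.
    + apply sumR_ext; intros; f_equal. lia.
    + apply sumR_ext; intros; f_equal. nia.
Qed.

Lemma two_pt_sq f1 f2 F1 F2 v1 v2 l :
  0 < v1 -> 0 < v2 -> f1^2 <= F1 * v1 -> f2^2 <= F2 * v2 -> 0 <= l <= 1 ->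
  (l*f1 + (1-l)*f2)^2 <= (l*F1 + (1-l)*F2) * (l*v1 + (1-l)*v2).
Proof.
  intros Hv1 Hv2 H1 H2 Hl.
  assert (HF1: F1 * v1 * v2 >= f1^2 * v2) by nra.
  assert (HF2: F2 * v2 * v1 >= f2^2 * v1) by nra.
  assert (Hc: (F1 * v2 + F2 * v1) * (v1 * v2) >= 2 * f1 * f2 * (v1 * v2)).
  { assert (F1*v1*v2*v2 >= f1^2*v2*v2) by nra.
    assert (F2*v2*v1*v1 >= f2^2*v1*v1) by nra.
    pose proof (pow2_ge_0 (f1*v2 - f2*v1)).
    replace ((F1 * v2 + F2 * v1) * (v1 * v2)) with (F1*v1*v2*v2 + F2*v2*v1*v1) by ring.
    nra. }
  assert (Hc2: F1 * v2 + F2 * v1 >= 2 * f1 * f2).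
  { apply Rle_ge. apply Rmult_le_reg_r with (v1*v2). nra. lra. }
  assert (0 <= l^2 * (F1*v1 - f1^2)) by (apply Rmult_le_pos; nra).
  assert (0 <= (1-l)^2 * (F2*v2 - f2^2)) by (apply Rmult_le_pos; nra).
  assert (0 <= l*(1-l) * (F1*v2 + F2*v1 - 2*f1*f2)) by (apply Rmult_le_pos; nra).
  nra.
Qed.

Lemma two_pt_uv u1 u2 v1 v2 l :
  0 < u1 -> 0 < u2 -> 0 < v1 -> 0 < v2 -> 1 <= u1*v1 -> 1 <= u2*v2 -> 0 <= l <= 1 ->
  1 <= (l*u1 + (1-l)*u2) * (l*v1 + (1-l)*v2).
Proof.
  intros.
  assert (Hx: u1*v2 + u2*v1 >= 2).
  { assert ((u1*v2)*(u2*v1) >= 1).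
    { replace ((u1*v2)*(u2*v1)) with ((u1*v1)*(u2*v2)) by ring.
      assert (1*1 <= (u1*v1)*(u2*v2)) by (apply Rmult_le_compat; lra). lra. }
    assert (0 < u1*v2) by nra. assert (0 < u2*v1) by nra.
    pose proof (pow2_ge_0 (u1*v2 - u2*v1)). nra. }
  assert (0 <= l^2 * (u1*v1 - 1)) by (apply Rmult_le_pos; nra).
  assert (0 <= (1-l)^2 * (u2*v2 - 1)) by (apply Rmult_le_pos; nra).
  assert (0 <= l*(1-l) * (u1*v2 + u2*v1 - 2)) by (apply Rmult_le_pos; nra).
  nra.
Qed.

Lemma nine8 u1 u2 v1 v2 A l :
  0 < u1 -> 0 < u2 -> 0 < v1 -> 0 < v2 -> u1*v1 <= A -> u2*v2 <= A ->
  ((u1+u2)/2) * ((v1+v2)/2) <= A -> 0 <= l <= 1 ->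
  (l*u1 + (1-l)*u2) * (l*v1 + (1-l)*v2) <= 9/8 * A.
Proof.
  intros.
  set (y0 := u2*v2). set (y1 := u1*v1). set (yh := ((u1+u2)/2) * ((v1+v2)/2)).
  assert (E: (l*u1 + (1-l)*u2) * (l*v1 + (1-l)*v2) =
    (2*l-1)*(l-1)*y0 + 4*l*(1-l)*yh + l*(2*l-1)*y1) by (unfold y0, y1, yh; field).
  rewrite E.
  assert (0 <= y0) by (unfold y0; nra). assert (0 <= y1) by (unfold y1; nra).
  destruct (Rle_dec l (1/2)).
  - assert (0 <= (2*l-1)*(l-1)) by nra. assert (0 <= 4*l*(1-l)) by nra.
    assert (l*(2*l-1) <= 0) by nra.
    assert ((2*l-1)*(l-1)*y0 <= (2*l-1)*(l-1)*A) by (apply Rmult_le_compat_l; auto).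
    assert (4*l*(1-l)*yh <= 4*l*(1-l)*A) by (apply Rmult_le_compat_l; auto).
    assert (l*(2*l-1)*y1 <= 0) by (assert (0 <= -(l*(2*l-1))) by lra; assert (0 <= -(l*(2*l-1))*y1) by (apply Rmult_le_pos; auto); lra).
    assert ((2*l-1)*(l-1) + 4*l*(1-l) <= 9/8) by (pose proof (pow2_ge_0 (l-1/4)); nra).
    assert (0 <= A) by nra.
    assert (((2*l-1)*(l-1) + 4*l*(1-l))*A <= 9/8*A) by (apply Rmult_le_compat_r; lra). lra.
  - assert ((2*l-1)*(l-1) <= 0) by nra. assert (0 <= 4*l*(1-l)) by nra.
    assert (0 <= l*(2*l-1)) by nra.
    assert (l*(2*l-1)*y1 <= l*(2*l-1)*A) by (apply Rmult_le_compat_l; auto).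
    assert (4*l*(1-l)*yh <= 4*l*(1-l)*A) by (apply Rmult_le_compat_l; auto).
    assert ((2*l-1)*(l-1)*y0 <= 0) by (assert (0 <= -((2*l-1)*(l-1))) by lra; assert (0 <= -((2*l-1)*(l-1))*y0) by (apply Rmult_le_pos; auto); lra).
    assert (l*(2*l-1) + 4*l*(1-l) <= 9/8) by (pose proof (pow2_ge_0 (l-3/4)); nra).
    assert (0 <= A) by nra.
    assert ((l*(2*l-1) + 4*l*(1-l))*A <= 9/8*A) by (apply Rmult_le_compat_r; lra). lra.
Qed.

Definition good (P : pt) (m : R) : Prop :=
  0 < pu P /\ 0 < pv P /\ 1 <= pu P * pv P /\ pf P ^ 2 <= pF P * pv P /\
  pg P ^ 2 <= pG P * pu P /\ 0 <= m /\ m <= 1.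

Lemma inE_good A P m : inE A P m -> good P m.
Proof. unfold inE, good; tauto. Qed.

Lemma good_inE A P m : good P m -> pu P * pv P <= A -> inE A P m.
Proof. unfold inE, good; tauto. Qed.

Lemma good_comb P Q m1 m2 l : good P m1 -> good Q m2 -> 0 <= l <= 1 ->
  good (comb l P Q) (l*m1 + (1-l)*m2).
Proof.
  unfold good; intros (Hu1&Hv1&Huv1&Hf1&Hg1&Hm1&Hm1') (Hu2&Hv2&Huv2&Hf2&Hg2&Hm2&Hm2') Hl.
  unfold comb; simpl. repeat split.
  - destruct (Req_dec l 0). subst; lra. nra.
  - destruct (Req_dec l 0). subst; lra. nra.
  - apply two_pt_uv; auto.
  - apply two_pt_sq; auto.
  - apply two_pt_sq; auto.
  - nra.
  - nra.
Qed.

Lemma good_QP w L ML r j : (forall i, 0 < w i) -> (forall i, good (L i) (ML i)) ->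
  good (QP w L r j) (Qh w ML r j).
Proof.
  intros Hw HL. revert j; induction r; intros j.
  - rewrite QP_0. simpl. auto.
  - rewrite QP_S. cbn [Qh]. apply good_comb; auto. apply lam01; auto.
Qed.

Lemma node_conc (Bf : pt -> R -> R) A' P1 P2 m1 m2 l :
  (forall Y N, inE A' Y N -> 0 <= Bf Y N) ->
  (forall Y N Y1 N1 Y2 N2, inE A' Y N -> inE A' Y1 N1 -> inE A' Y2 N2 ->
     Y = ptavg Y1 Y2 -> 0 <= N - (N1 + N2) / 2 ->
     Bf Y N - / 2 * (Bf Y1 N1 + Bf Y2 N2)
       >= (N - (N1 + N2) / 2) * Rabs (pf Y) * Rabs (pg Y1 - pg Y2)) ->
  (forall mu, 0 <= mu <= 1 -> inE A' (comb mu P1 P2) (mu*m1 + (1-mu)*m2)) ->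
  0 <= l <= 1 ->
  Bf (comb l P1 P2) (l*m1 + (1-l)*m2) >= l * Bf P1 m1 + (1-l) * Bf P2 m2.
Proof.
  intros Hnn Hmid Hseg Hl.
  set (phi := fun mu => Bf (comb mu P1 P2) (mu*m1 + (1-mu)*m2)).
  assert (H1: phi 1 = Bf P1 m1).
  { unfold phi. f_equal. apply pt_ext; unfold comb; simpl; ring. ring. }
  assert (H0: phi 0 = Bf P2 m2).
  { unfold phi. f_equal. apply pt_ext; unfold comb; simpl; ring. ring. }
  rewrite <- H1, <- H0. apply (conc1 phi); auto.
  - intros x y Hx Hy. unfold phi.
    pose proof (Hmid (comb ((x+y)/2) P1 P2) ((x+y)/2*m1 + (1-(x+y)/2)*m2)
      (comb x P1 P2) (x*m1 + (1-x)*m2) (comb y P1 P2) (y*m1 + (1-y)*m2)) as HH.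
    assert (E: (x + y) / 2 * m1 + (1 - (x + y) / 2) * m2 -
      (x * m1 + (1 - x) * m2 + (y * m1 + (1 - y) * m2)) / 2 = 0) by field.
    rewrite E in HH. rewrite !Rmult_0_l in HH.
    assert (0 <= (x+y)/2 <= 1) by lra.
    specialize (HH (Hseg _ H) (Hseg _ Hx) (Hseg _ Hy)).
    assert (comb ((x + y) / 2) P1 P2 = ptavg (comb x P1 P2) (comb y P1 P2)).
    { apply pt_ext; unfold comb, ptavg; simpl; field. }
    specialize (HH H2 (Rle_refl 0)). lra.
  - intros x Hx. unfold phi. apply Hnn, Hseg; auto.
Qed.

Lemma Qh_bound w h r j : (forall i, 2/3 <= w i <= 4/3) -> (forall i, 0 <= h i) ->
  Qh w h r j <= 2 * Ts h r j / 2^r.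
Proof.
  intros Hw Hh.
  assert (Hwp: forall i, 0 < w i) by (intros i; specialize (Hw i); lra).
  pose proof (Ts_Qh w h r j Hwp) as E.
  assert (E1: Ts (fun i => w i * h i) r j <= 4/3 * Ts h r j).
  { rewrite <- (Ts_scal (4/3) h r j). apply Ts_le. intros i. specialize (Hw i). specialize (Hh i). nra. }
  assert (E2: 2/3 * 2^r <= Ts w r j).
  { replace (2/3 * 2^r) with (2^r * (2/3)) by ring. rewrite <- (Ts_const (2/3) r j). apply Ts_le. intros; apply Hw. }
  pose proof (pow2_pos r). pose proof (Ts_nonneg h r j Hh).
  assert (0 <= Qh w h r j \/ Qh w h r j < 0) as [Hq|Hq] by lra.
  - assert (2/3 * 2^r * Qh w h r j <= 4/3 * Ts h r j) by nra.
    apply (Rmult_le_reg_l (2/3 * 2^r)). nra.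
    replace (2 / 3 * 2 ^ r * (2 * Ts h r j / 2 ^ r)) with (4/3 * Ts h r j) by (field; lra). lra.
  - assert (0 <= 2 * Ts h r j / 2^r). { unfold Rdiv. apply Rmult_le_pos. lra. left; apply Rinv_0_lt_compat; lra. }
    lra.
Qed.

Lemma pow_split n r : (S r <= n)%nat -> (2^(n-r) = 2 * 2^(n - S r))%nat.
Proof. intros H. replace (n - r)%nat with (S (n - S r)) by lia. reflexivity. Qed.

Lemma Ts_tree n (X : nat -> nat -> pt) (L : nat -> pt) (c : pt -> R)
  (hc : forall P Q, c (ptavg P Q) = (c P + c Q)/2)
  (HL : forall i, (i < 2^n)%nat -> L i = X n i)
  (HX : forall k j, (k < n)%nat -> (j < 2 ^ k)%nat ->
     X k j = ptavg (X (S k) (2 * j)%nat) (X (S k) (2 * j + 1)%nat)) :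
  forall r, (r <= n)%nat -> forall j, (j < 2^(n-r))%nat ->
  Ts (fun i => c (L i)) r j = 2^r * c (X (n-r)%nat j).
Proof.
  induction r as [|r IH]; intros Hr j Hj.
  - cbn [Ts]. rewrite Nat.sub_0_r in *. rewrite HL by auto. simpl; ring.
  - cbn [Ts]. pose proof (pow_split n r Hr) as E.
    rewrite !IH by lia.
    rewrite (HX (n - S r)%nat j) by lia.
    replace (S (n - S r)) with (n - r)%nat by lia.
    rewrite hc. simpl. field.
Qed.


Lemma seg_mem n A (X : nat -> nat -> pt) (M : nat -> nat -> R) (L : nat -> pt) (ML : nat -> R) w
  (HL : forall i, (i < 2^n)%nat -> L i = X n i)
  (HLg : forall i, good (L i) (ML i))
  (Hmem : forall k j, (k <= n)%nat -> (j < 2 ^ k)%nat -> inE A (X k j) (M k j))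
  (HX : forall k j, (k < n)%nat -> (j < 2 ^ k)%nat ->
     X k j = ptavg (X (S k) (2 * j)%nat) (X (S k) (2 * j + 1)%nat))
  (Hw : forall i, 2/3 <= w i <= 4/3) :
  forall r j mu, (S r <= n)%nat -> (j < 2^(n - S r))%nat -> 0 <= mu <= 1 ->
  inE (9/2*A) (comb mu (QP w L r (2*j)%nat) (QP w L r (2*j+1)%nat))
     (mu * Qh w ML r (2*j)%nat + (1-mu) * Qh w ML r (2*j+1)%nat).
Proof.
  intros r j mu Hr Hj Hmu.
  assert (Hwp: forall i, 0 < w i) by (intros i; specialize (Hw i); lra).
  pose proof (pow_split n r Hr) as E.
  apply good_inE.
  { apply good_comb; auto; apply good_QP; auto. }
  assert (HLu: forall i, 0 <= pu (L i)) by (intros i; destruct (HLg i); lra).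
  assert (HLv: forall i, 0 <= pv (L i)) by (intros i; destruct (HLg i) as (_&?&_); lra).
  pose proof (Qh_bound w _ r (2*j)%nat Hw HLu) as Bu1.
  pose proof (Qh_bound w _ r (2*j+1)%nat Hw HLu) as Bu2.
  pose proof (Qh_bound w _ r (2*j)%nat Hw HLv) as Bv1.
  pose proof (Qh_bound w _ r (2*j+1)%nat Hw HLv) as Bv2.
  rewrite (Ts_tree n X L pu (fun P Q => eq_refl) HL HX r ltac:(lia)) in Bu1, Bu2 by lia.
  rewrite (Ts_tree n X L pv (fun P Q => eq_refl) HL HX r ltac:(lia)) in Bv1, Bv2 by lia.
  pose proof (pow2_pos r).
  replace (2 * (2 ^ r * pu (X (n - r)%nat (2 * j)%nat)) / 2 ^ r) with (2 * pu (X (n - r)%nat (2 * j)%nat)) in Bu1 by (field; lra).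
  replace (2 * (2 ^ r * pu (X (n - r)%nat (2 * j+1)%nat)) / 2 ^ r) with (2 * pu (X (n - r)%nat (2 * j+1)%nat)) in Bu2 by (field; lra).
  replace (2 * (2 ^ r * pv (X (n - r)%nat (2 * j)%nat)) / 2 ^ r) with (2 * pv (X (n - r)%nat (2 * j)%nat)) in Bv1 by (field; lra).
  replace (2 * (2 ^ r * pv (X (n - r)%nat (2 * j+1)%nat)) / 2 ^ r) with (2 * pv (X (n - r)%nat (2 * j+1)%nat)) in Bv2 by (field; lra).
  pose proof (Hmem (n-r)%nat (2*j)%nat ltac:(lia) ltac:(lia)) as M1.
  pose proof (Hmem (n-r)%nat (2*j+1)%nat ltac:(lia) ltac:(lia)) as M2.
  pose proof (Hmem (n - S r)%nat j ltac:(lia) ltac:(lia)) as M0.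
  rewrite (HX (n - S r)%nat j) in M0 by lia.
  replace (S (n - S r)) with (n - r)%nat in M0 by lia.
  set (u1 := pu (X (n - r)%nat (2 * j)%nat)) in *.
  set (u2 := pu (X (n - r)%nat (2 * j+1)%nat)) in *.
  set (v1 := pv (X (n - r)%nat (2 * j)%nat)) in *.
  set (v2 := pv (X (n - r)%nat (2 * j+1)%nat)) in *.
  destruct M1 as (Hu1&Hv1&_&HA1&_). destruct M2 as (Hu2&Hv2&_&HA2&_).
  destruct M0 as (_&_&_&HA0&_). simpl in HA0. fold u1 u2 v1 v2 in HA0.
  pose proof (nine8 u1 u2 v1 v2 A mu Hu1 Hu2 Hv1 Hv2 HA1 HA2 HA0 Hmu) as N8.
  destruct (good_QP w L ML r (2*j)%nat Hwp HLg) as (Qu1&Qv1&_).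
  destruct (good_QP w L ML r (2*j+1)%nat Hwp HLg) as (Qu2&Qv2&_).
  unfold QP in Qu1, Qv1, Qu2, Qv2; cbn [pu pv] in Qu1, Qv1, Qu2, Qv2.
  unfold comb, QP; cbn [pu pv].
  set (U1 := Qh w (fun i => pu (L i)) r (2*j)%nat) in *.
  set (U2 := Qh w (fun i => pu (L i)) r (2*j+1)%nat) in *.
  set (V1 := Qh w (fun i => pv (L i)) r (2*j)%nat) in *.
  set (V2 := Qh w (fun i => pv (L i)) r (2*j+1)%nat) in *.
  assert (mu * U1 <= mu * (2*u1)) by (apply Rmult_le_compat_l; lra).
  assert ((1-mu) * U2 <= (1-mu) * (2*u2)) by (apply Rmult_le_compat_l; lra).
  assert (mu * V1 <= mu * (2*v1)) by (apply Rmult_le_compat_l; lra).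
  assert ((1-mu) * V2 <= (1-mu) * (2*v2)) by (apply Rmult_le_compat_l; lra).
  assert (0 <= mu * U1) by (apply Rmult_le_pos; lra).
  assert (0 <= (1-mu) * U2) by (apply Rmult_le_pos; lra).
  assert (0 <= mu * V1) by (apply Rmult_le_pos; lra).
  assert (0 <= (1-mu) * V2) by (apply Rmult_le_pos; lra).
  assert (0 <= mu * U1 + (1-mu) * U2 <= 2 * (mu * u1 + (1-mu) * u2)) by lra.
  assert (0 <= mu * V1 + (1-mu) * V2 <= 2 * (mu * v1 + (1-mu) * v2)) by lra.
  assert ((mu * U1 + (1-mu) * U2) * (mu * V1 + (1-mu) * V2) <=
          (2 * (mu * u1 + (1-mu) * u2)) * (2 * (mu * v1 + (1-mu) * v2))).
  { apply Rmult_le_compat; lra. }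
  lra.
Qed.

Lemma jensen n A (X : nat -> nat -> pt) (M : nat -> nat -> R) (L : nat -> pt) (ML : nat -> R) w
  (Bf : pt -> R -> R)
  (HL : forall i, (i < 2^n)%nat -> L i = X n i)
  (HLg : forall i, good (L i) (ML i))
  (Hmem : forall k j, (k <= n)%nat -> (j < 2 ^ k)%nat -> inE A (X k j) (M k j))
  (HX : forall k j, (k < n)%nat -> (j < 2 ^ k)%nat ->
     X k j = ptavg (X (S k) (2 * j)%nat) (X (S k) (2 * j + 1)%nat))
  (Hw : forall i, 2/3 <= w i <= 4/3)
  (Hnn : forall Y N, inE (9/2*A) Y N -> 0 <= Bf Y N)
  (Hmid : forall Y N Y1 N1 Y2 N2, inE (9/2*A) Y N -> inE (9/2*A) Y1 N1 -> inE (9/2*A) Y2 N2 ->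
     Y = ptavg Y1 Y2 -> 0 <= N - (N1 + N2) / 2 ->
     Bf Y N - / 2 * (Bf Y1 N1 + Bf Y2 N2)
       >= (N - (N1 + N2) / 2) * Rabs (pf Y) * Rabs (pg Y1 - pg Y2)) :
  forall r, (r <= n)%nat -> forall j, (j < 2^(n-r))%nat ->
  Ts w r j * Bf (QP w L r j) (Qh w ML r j) >= Ts (fun i => w i * Bf (L i) (ML i)) r j.
Proof.
  assert (Hwp: forall i, 0 < w i) by (intros i; specialize (Hw i); lra).
  induction r as [|r IH]; intros Hr j Hj.
  - rewrite QP_0. cbn [Ts Qh]. lra.
  - rewrite QP_S. cbn [Ts Qh].
    pose proof (pow_split n r Hr) as E.
    pose proof (IH ltac:(lia) (2*j)%nat ltac:(lia)) as I1.
    pose proof (IH ltac:(lia) (2*j+1)%nat ltac:(lia)) as I2.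
    pose proof (lam01 w r j Hwp) as Hl.
    pose proof (node_conc Bf (9/2*A) (QP w L r (2*j)%nat) (QP w L r (2*j+1)%nat)
      (Qh w ML r (2*j)%nat) (Qh w ML r (2*j+1)%nat) (lam w r j) Hnn Hmid
      (fun mu Hmu => seg_mem n A X M L ML w HL HLg Hmem HX Hw r j mu Hr Hj Hmu) Hl) as HC.
    pose proof (Ts_pos w r (2*j)%nat Hwp). pose proof (Ts_pos w r (2*j+1)%nat Hwp).
    set (a := Ts w r (2*j)%nat) in *. set (b := Ts w r (2*j+1)%nat) in *.
    assert (El: (a + b) * lam w r j = a) by (unfold lam; fold a b; field; lra).
    assert (El2: (a + b) * (1 - lam w r j) = b) by (unfold lam; fold a b; field; lra).
    set (BB := Bf (comb (lam w r j) (QP w L r (2 * j)) (QP w L r (2 * j + 1)))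
      (lam w r j * Qh w ML r (2 * j) + (1 - lam w r j) * Qh w ML r (2 * j + 1))) in *.
    assert ((a+b) * BB >= (a+b) * (lam w r j * Bf (QP w L r (2 * j)) (Qh w ML r (2 * j)) +
      (1 - lam w r j) * Bf (QP w L r (2 * j + 1)) (Qh w ML r (2 * j + 1)))).
    { apply Rle_ge, Rmult_le_compat_l; lra. }
    rewrite Rmult_plus_distr_l, <- !Rmult_assoc, El, El2 in H1. lra.
Qed.

Lemma Ts_add h1 h2 r j : Ts (fun i => h1 i + h2 i) r j = Ts h1 r j + Ts h2 r j.
Proof. rewrite <- (Rmult_1_l (Ts h1 r j)), <- (Rmult_1_l (Ts h2 r j)), <- Ts_lin.
  apply Ts_ext; intros; ring. Qed.

Lemma inE_mono A A' P m : A <= A' -> inE A P m -> inE A' P m.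
Proof. unfold inE; intros; intuition lra. Qed.

Lemma root_mem n A (X : nat -> nat -> pt) (M : nat -> nat -> R) (L : nat -> pt) (ML : nat -> R) w
  (HL : forall i, (i < 2^n)%nat -> L i = X n i)
  (HLg : forall i, good (L i) (ML i))
  (Hmem : forall k j, (k <= n)%nat -> (j < 2 ^ k)%nat -> inE A (X k j) (M k j))
  (HX : forall k j, (k < n)%nat -> (j < 2 ^ k)%nat ->
     X k j = ptavg (X (S k) (2 * j)%nat) (X (S k) (2 * j + 1)%nat))
  (Hw : forall i, 2/3 <= w i <= 4/3) :
  inE (9/2*A) (QP w L n 0) (Qh w ML n 0).
Proof.
  assert (Hwp: forall i, 0 < w i) by (intros i; specialize (Hw i); lra).
  pose proof (good_QP w L ML n 0 Hwp HLg) as G.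
  apply good_inE; auto.
  assert (HLu: forall i, 0 <= pu (L i)) by (intros i; destruct (HLg i); lra).
  assert (HLv: forall i, 0 <= pv (L i)) by (intros i; destruct (HLg i) as (_&?&_); lra).
  pose proof (Qh_bound w _ n 0 Hw HLu) as Bu.
  pose proof (Qh_bound w _ n 0 Hw HLv) as Bv.
  rewrite (Ts_tree n X L pu (fun P Q => eq_refl) HL HX n ltac:(lia)) in Bu by (rewrite Nat.sub_diag; simpl; lia).
  rewrite (Ts_tree n X L pv (fun P Q => eq_refl) HL HX n ltac:(lia)) in Bv by (rewrite Nat.sub_diag; simpl; lia).
  rewrite Nat.sub_diag in Bu, Bv. pose proof (pow2_pos n).
  replace (2 * (2 ^ n * pu (X 0%nat 0%nat)) / 2 ^ n) with (2 * pu (X 0%nat 0%nat)) in Bu by (field; lra).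
  replace (2 * (2 ^ n * pv (X 0%nat 0%nat)) / 2 ^ n) with (2 * pv (X 0%nat 0%nat)) in Bv by (field; lra).
  destruct (Hmem 0%nat 0%nat ltac:(lia) ltac:(simpl; lia)) as (Hu&Hv&H1&HA&_).
  destruct G as (Gu&Gv&_).
  unfold QP in *; cbn [pu pv] in *.
  assert (Qh w (fun i => pu (L i)) n 0 * Qh w (fun i => pv (L i)) n 0 <=
     (2 * pu (X 0%nat 0%nat)) * (2 * pv (X 0%nat 0%nat))) by (apply Rmult_le_compat; lra).
  replace ((2 * pu (X 0%nat 0%nat)) * (2 * pv (X 0%nat 0%nat))) with (4 * (pu (X 0%nat 0%nat) * pv (X 0%nat 0%nat))) in H0 by ring.
  lra.
Qed.

Theorem lemma8p3 (C : R) (B : R -> pt -> R -> R) (A : R) (n : nat)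
  (X : nat -> nat -> pt) (M : nat -> nat -> R) :
  0 < C ->
  (forall A0, 1 < A0 -> forall Y N, inE A0 Y N ->
     0 <= B A0 Y N /\ B A0 Y N <= C * A0 * sqrt (pF Y) * sqrt (pG Y)) ->
  (forall A0, 1 < A0 -> forall Y N Y1 N1 Y2 N2,
     inE A0 Y N -> inE A0 Y1 N1 -> inE A0 Y2 N2 ->
     Y = ptavg Y1 Y2 -> 0 <= N - (N1 + N2) / 2 ->
     B A0 Y N - / 2 * (B A0 Y1 N1 + B A0 Y2 N2)
       >= (N - (N1 + N2) / 2) * Rabs (pf Y) * Rabs (pg Y1 - pg Y2)) ->
  1 < A -> (1 <= n)%nat ->
  (forall k j, (k <= n)%nat -> (j < 2 ^ k)%nat -> inE A (X k j) (M k j)) ->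
  (forall k j, (k < n)%nat -> (j < 2 ^ k)%nat ->
     X k j = ptavg (X (S k) (2 * j)%nat) (X (S k) (2 * j + 1)%nat)) ->
  (forall k j, (1 <= k)%nat -> (k < n)%nat -> (j < 2 ^ k)%nat ->
     M k j = (M (S k) (2 * j)%nat + M (S k) (2 * j + 1)%nat) / 2) ->
  0 <= M 0%nat 0%nat - sumR (2 ^ n)%nat (fun j => M n j) / 2 ^ n ->
  (M 0%nat 0%nat - sumR (2 ^ n)%nat (fun j => M n j) / 2 ^ n)
    * Rabs (pf (X 0%nat 0%nat))
    * (sumR (2 ^ n)%nat (fun j => Rabs (pg (X n j) - pg (X 0%nat 0%nat))) / 2 ^ n)
  <= 36 * (B (9 / 2 * A) (X 0%nat 0%nat) (M 0%nat 0%nat)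
           - sumR (2 ^ n)%nat (fun j => B (9 / 2 * A) (X n j) (M n j)) / 2 ^ n).
Proof.
  intros HC HB1 HB2 HA Hn Hmem HX _ Hd.
  assert (HA': 1 < 9/2*A) by lra.
  set (Bf := B (9/2*A)).
  assert (Hnn: forall Y N, inE (9/2*A) Y N -> 0 <= Bf Y N) by (intros; apply (HB1 _ HA'); auto).
  pose proof (HB2 _ HA') as Hmid. fold Bf in Hmid.
  assert (Hpn: (0 < 2^n)%nat) by (pose proof (Nat.pow_nonzero 2 n); lia).
  set (L := fun i => if Nat.ltb i (2^n) then X n i else X n 0%nat).
  set (ML := fun i => if Nat.ltb i (2^n) then M n i else M n 0%nat).
  assert (HL: forall i, (i < 2^n)%nat -> L i = X n i).
  { intros i Hi. unfold L. rewrite (proj2 (Nat.ltb_lt _ _) Hi). auto. }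
  assert (HML: forall i, (i < 2^n)%nat -> ML i = M n i).
  { intros i Hi. unfold ML. rewrite (proj2 (Nat.ltb_lt _ _) Hi). auto. }
  assert (HLg: forall i, good (L i) (ML i)).
  { intros i. unfold L, ML. destruct (Nat.ltb_spec i (2^n)); apply inE_good with A; apply Hmem; auto. }
  set (g0 := pg (X 0%nat 0%nat)).
  set (gl := fun i => pg (L i)).
  set (ind := fun i => if Rle_dec g0 (gl i) then 1 else 0).
  set (Np := 2^n).
  assert (HNp: 0 < Np) by apply pow2_pos.
  set (Pc := Ts ind n 0).
  set (Qc := Ts (fun i => 1 - ind i) n 0).
  assert (Hind: forall i, ind i = 0 \/ ind i = 1).
  { intros i; unfold ind; destruct (Rle_dec g0 (gl i)); auto. }
  assert (HPQ: Pc + Qc = Np).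
  { unfold Pc, Qc. rewrite <- Ts_add. rewrite (Ts_ext _ (fun _ => 1)). rewrite Ts_const. unfold Np; ring.
    intros; ring. }
  assert (HP0: 0 <= Pc) by (apply Ts_nonneg; intros i; destruct (Hind i); lra).
  assert (HQ0: 0 <= Qc) by (apply Ts_nonneg; intros i; destruct (Hind i); lra).
  set (s := fun i => Qc/Np * ind i + (- (Pc/Np)) * (1 - ind i)).
  assert (Hs: forall i, -1 <= s i <= 1).
  { intros i. unfold s. assert (Qc/Np <= 1) by (apply Rmult_le_reg_r with Np; auto; unfold Rdiv; rewrite Rmult_assoc, Rinv_l; lra).
    assert (Pc/Np <= 1) by (apply Rmult_le_reg_r with Np; auto; unfold Rdiv; rewrite Rmult_assoc, Rinv_l; lra).
    assert (0 <= Qc/Np) by (unfold Rdiv; apply Rmult_le_pos; [lra| left; apply Rinv_0_lt_compat; lra]).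
    assert (0 <= Pc/Np) by (unfold Rdiv; apply Rmult_le_pos; [lra| left; apply Rinv_0_lt_compat; lra]).
    destruct (Hind i) as [E|E]; rewrite E; lra. }
  assert (Hs0: Ts s n 0 = 0).
  { unfold s. rewrite Ts_lin. fold Pc Qc. field. lra. }
  set (w := fun i => 1 + s i / 3).
  set (w' := fun i => 1 - s i / 3).
  assert (Hw: forall i, 2/3 <= w i <= 4/3) by (intros i; unfold w; specialize (Hs i); lra).
  assert (Hw': forall i, 2/3 <= w' i <= 4/3) by (intros i; unfold w'; specialize (Hs i); lra).
  assert (Hwp: forall i, 0 < w i) by (intros i; specialize (Hw i); lra).
  assert (Hwp': forall i, 0 < w' i) by (intros i; specialize (Hw' i); lra).
  assert (Tw: Ts w n 0 = Np).
  { unfold w. rewrite (Ts_ext _ (fun i => 1 * 1 + (1/3) * s i)) by (intros; field).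
    rewrite Ts_lin, Hs0. rewrite (Ts_const 1). unfold Np; ring. }
  assert (Tw': Ts w' n 0 = Np).
  { unfold w'. rewrite (Ts_ext _ (fun i => 1 * 1 + (-1/3) * s i)) by (intros; field).
    rewrite Ts_lin, Hs0. rewrite (Ts_const 1). unfold Np; ring. }
  assert (Hww: forall h, Ts (fun i => w i * h i) n 0 + Ts (fun i => w' i * h i) n 0 = 2 * Ts h n 0).
  { intros h. rewrite <- Ts_add, <- (Ts_scal 2 h n 0). apply Ts_ext. intros; unfold w, w'; ring. }
  assert (HQh: forall h, Qh w h n 0 = Ts (fun i => w i * h i) n 0 / Np).
  { intros h. rewrite <- (Ts_Qh w h n 0 Hwp), Tw. field. lra. }
  assert (HQh': forall h, Qh w' h n 0 = Ts (fun i => w' i * h i) n 0 / Np).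
  { intros h. rewrite <- (Ts_Qh w' h n 0 Hwp'), Tw'. field. lra. }
  assert (Havg: forall h, (Qh w h n 0 + Qh w' h n 0)/2 = Ts h n 0 / Np).
  { intros h. rewrite HQh, HQh'. pose proof (Hww h). replace (Ts h n 0) with ((Ts (fun i => w i * h i) n 0 + Ts (fun i => w' i * h i) n 0)/2) by lra. field. lra. }
  assert (Hcoord: forall c : pt -> R, (forall P Q, c (ptavg P Q) = (c P + c Q)/2) ->
     (Qh w (fun i => c (L i)) n 0 + Qh w' (fun i => c (L i)) n 0)/2 = c (X 0%nat 0%nat)).
  { intros c hc. rewrite Havg.
    rewrite (Ts_tree n X L c hc HL HX n (le_n _) 0) by (rewrite Nat.sub_diag; simpl; lia).
    rewrite Nat.sub_diag. unfold Np. field. apply pow_nonzero; lra. }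
  set (Y1 := QP w L n 0). set (Y2 := QP w' L n 0).
  set (N1 := Qh w ML n 0). set (N2 := Qh w' ML n 0).
  assert (HX0: X 0%nat 0%nat = ptavg Y1 Y2).
  { apply pt_ext; unfold ptavg, Y1, Y2, QP; cbn [pf pg pF pG pu pv]; symmetry; apply Hcoord; reflexivity. }
  assert (HN: (N1 + N2)/2 = sumR (2^n) (fun j => M n j) / 2^n).
  { unfold N1, N2. rewrite Havg. rewrite Ts_sumR. fold Np. f_equal.
    apply sumR_ext. intros i Hi. rewrite Nat.mul_0_l, Nat.add_0_l. auto. }
  set (D := M 0%nat 0%nat - sumR (2 ^ n)%nat (fun j => M n j) / 2 ^ n) in *.
  assert (M1: inE (9/2*A) Y1 N1) by (apply (root_mem n A X M L ML w); auto).
  assert (M2: inE (9/2*A) Y2 N2) by (apply (root_mem n A X M L ML w'); auto).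
  assert (M0: inE (9/2*A) (X 0%nat 0%nat) (M 0%nat 0%nat)).
  { apply inE_mono with A. lra. apply Hmem; simpl; lia. }
  assert (Hd': 0 <= M 0%nat 0%nat - (N1 + N2)/2) by (rewrite HN; auto).
  pose proof (Hmid _ _ _ _ _ _ M0 M1 M2 HX0 Hd') as Hroot.
  rewrite HN in Hroot. fold D in Hroot.
  set (T := Ts (fun i => Rabs (gl i - g0)) n 0).
  set (T1 := Ts (fun i => ind i * (gl i - g0)) n 0).
  set (T2 := Ts (fun i => (1 - ind i) * (g0 - gl i)) n 0).
  assert (HT: T = T1 + T2).
  { unfold T, T1, T2. rewrite <- Ts_add. apply Ts_ext. intros i. unfold ind.
    destruct (Rle_dec g0 (gl i)).
    - rewrite Rabs_pos_eq; lra.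
    - rewrite Rabs_left; lra. }
  assert (Hgl: Ts gl n 0 = Np * g0).
  { unfold gl. rewrite (Ts_tree n X L pg (fun P Q => eq_refl) HL HX n (le_n _) 0) by (rewrite Nat.sub_diag; simpl; lia).
    rewrite Nat.sub_diag. reflexivity. }
  assert (HT12: T1 - T2 = 0).
  { replace (T1 - T2) with (1 * T1 + (-1) * T2) by ring. unfold T1, T2.
    rewrite <- (Ts_lin 1 (-1) (fun i => ind i * (gl i - g0)) (fun i => (1 - ind i) * (g0 - gl i)) n 0). rewrite (Ts_ext _ (fun i => 1 * gl i + (-g0) * 1)).
    rewrite Ts_lin, Ts_const, Hgl. unfold Np; ring.
    intros i. ring. }
  assert (Hsg: Ts (fun i => s i * gl i) n 0 = T / 2).
  { rewrite (Ts_ext _ (fun i => 1 * (s i * (gl i - g0)) + g0 * s i)) by (intros; ring).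
    rewrite Ts_lin, Hs0.
    rewrite (Ts_ext _ (fun i => Qc/Np * (ind i * (gl i - g0)) + Pc/Np * ((1 - ind i) * (g0 - gl i))))
      by (intros; unfold s; ring).
    rewrite Ts_lin. fold T1 T2.
    replace T1 with (T/2) by lra. replace T2 with (T/2) by lra.
    replace Qc with (Np - Pc) by lra. field. lra. }
  assert (Hg12: pg Y1 - pg Y2 = T / (3 * Np)).
  { unfold Y1, Y2, QP; cbn [pg]. rewrite HQh, HQh'.
    replace (Ts (fun i => w i * pg (L i)) n 0 / Np - Ts (fun i => w' i * pg (L i)) n 0 / Np)
      with ((1 * Ts (fun i => w i * gl i) n 0 + (-1) * Ts (fun i => w' i * gl i) n 0) / Np) by (unfold gl; field; lra).
    rewrite <- Ts_lin. rewrite (Ts_ext _ (fun i => (2/3) * (s i * gl i))) by (intros; unfold w, w'; field).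
    rewrite Ts_scal, Hsg. field. lra. }
  assert (HT0: 0 <= T) by (apply Ts_nonneg; intros; apply Rabs_pos).
  rewrite Hg12 in Hroot.
  rewrite (Rabs_pos_eq (T / (3*Np))) in Hroot by (unfold Rdiv; apply Rmult_le_pos; [lra| left; apply Rinv_0_lt_compat; lra]).
  pose proof (jensen n A X M L ML w Bf HL HLg Hmem HX Hw Hnn Hmid n (le_n _) 0
    ltac:(rewrite Nat.sub_diag; simpl; lia)) as J1.
  pose proof (jensen n A X M L ML w' Bf HL HLg Hmem HX Hw' Hnn Hmid n (le_n _) 0
    ltac:(rewrite Nat.sub_diag; simpl; lia)) as J2.
  fold Y1 N1 in J1. fold Y2 N2 in J2. rewrite Tw in J1. rewrite Tw' in J2.
  pose proof (Hww (fun i => Bf (L i) (ML i))) as HS.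
  assert (HSb: Ts (fun i => Bf (L i) (ML i)) n 0 = sumR (2^n) (fun j => B (9/2*A) (X n j) (M n j))).
  { rewrite Ts_sumR. apply sumR_ext. intros i Hi. rewrite Nat.mul_0_l, Nat.add_0_l.
    rewrite HL, HML; auto. }
  assert (HTs: T = sumR (2^n) (fun j => Rabs (pg (X n j) - pg (X 0%nat 0%nat)))).
  { unfold T. rewrite Ts_sumR. apply sumR_ext. intros i Hi. rewrite Nat.mul_0_l, Nat.add_0_l.
    unfold gl, g0. rewrite HL; auto. }
  fold Bf in HSb. fold g0 in HTs. rewrite <- HSb, <- HTs. fold Np.
  set (Sb := Ts (fun i => Bf (L i) (ML i)) n 0) in *.
  assert (Hav: (Bf Y1 N1 + Bf Y2 N2) / 2 >= Sb / Np).
  { apply Rle_ge. apply Rmult_le_reg_r with Np; auto.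
    replace (Sb / Np * Np) with Sb by (field; lra). lra. }
  assert (HDf: 0 <= D * Rabs (pf (X 0%nat 0%nat))) by (apply Rmult_le_pos; auto; apply Rabs_pos).
  assert (Hkey: D * Rabs (pf (X 0%nat 0%nat)) * (T / (3 * Np)) <= Bf (X 0%nat 0%nat) (M 0%nat 0%nat) - Sb / Np) by lra.
  assert (0 <= D * Rabs (pf (X 0%nat 0%nat)) * (T / (3 * Np))).
  { apply Rmult_le_pos; auto. unfold Rdiv; apply Rmult_le_pos; [lra| left; apply Rinv_0_lt_compat; lra]. }
  change (M 0%nat 0%nat - sumR (2 ^ n) (fun j => M n j) / Np) with D.
  replace (D * Rabs (pf (X 0%nat 0%nat)) * (T / Np)) with (3 * (D * Rabs (pf (X 0%nat 0%nat)) * (T / (3 * Np)))) by (field; lra).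
  lra.
Qed.
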